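(* Let $n\geqslant m\geqslant2$. Then $\mathrm{SR}(n+2,m)=\mathrm{SR}(n,m)+\binom{m+2}{2}$. Furthermore, if $n+m$ is even, then $\mathrm{DR}(n+2,m)=\mathrm{DR}(n,m)+\binom{m+2}{2}$.
   Context: Let $p,q$ be distinct primes and $n,m$ positive integers. In $C_{p^nq^m}$ let $C_{p^aq^x}$ be the unique subgroup of order $p^aq^x$, and write $(a,x;b,y)$ for the pair of subgroups $(C_{p^aq^x},C_{p^bq^y})$ with $0\leqslant a\leqslant b\leqslant n$, $0\leqslant x\leqslant y\leqslant m$, $(a,x)\neq(b,y)$. Its midpoint is $(a+x+b+y)/2$, and $R_M$ (depending on $n,m$) is the set of all such pairs with midpoint $M$. The simple rainbow number $\mathrm{SR}(n,m)$ is $|R_{(n+m)/2}|$ if $n+m$ is odd, and $|R_{(n+m-1)/2}|$ (which equals $|R_{(n+m+1)/2}|$) if $n+m$ is even. For $n,m\geqslant2$ with $n+m$ even, the double rainbow number is $\mathrm{DR}(n,m)=|R_{(n+m)/2}|$. *)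

(* Defs.v *)
From mathcomp Require Import all_boot.
Set Implicit Arguments. Unset Strict Implicit. Unset Printing Implicit Defensive.

(* A pair of subgroups (C_{p^a q^x}, C_{p^b q^y}) of C_{p^n q^m} is encoded by
   its exponent quadruple (a, x, b, y).  The subgroup lattice of C_{p^n q^m}
   is in bijection with exponent pairs (a,x), 0<=a<=n, 0<=x<=m. *)
Definition is_pair (n m : nat) (t : nat * nat * nat * nat) : bool :=
  let: (a, x, b, y) := t in
  [&& a <= b, b <= n, x <= y, y <= m & (a, x) != (b, y)].

Definition quads (n m : nat) : seq (nat * nat * nat * nat) :=
  flatten [seq flatten [seq flatten [seq [seq (a, x, b, y) | y <- iota 0 m.+1]
                                   | b <- iota 0 n.+1]
                 | x <- iota 0 m.+1]
          | a <- iota 0 n.+1].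

(* |R_M| where M = s/2, i.e. s = 2M = a + x + b + y (twice the midpoint). *)
Definition cardR (n m s : nat) : nat :=
  count (fun t => is_pair n m t &&
           (let: (a, x, b, y) := t in a + x + b + y == s)) (quads n m).

Definition SR (n m : nat) : nat :=
  if odd (n + m) then cardR n m (n + m) else cardR n m (n + m - 1).

(* double rainbow number (meaningful for n+m even, n,m >= 2) : M = (n+m)/2 *)
Definition DR (n m : nat) : nat := cardR n m (n + m).

(* Main.v *)
Require Import Defs.
From mathcomp Require Import all_boot.
From mathcomp Require Import zify.

Definition F N m s a x b y : nat :=
  is_pair N m (a, x, b, y) && (a + x + b + y == s).

Lemma cardR_sum N m s : cardR N m s =
  \sum_(0 <= a < N.+1) \sum_(0 <= x < m.+1) \sum_(0 <= b < N.+1)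
    \sum_(0 <= y < m.+1) F N m s a x b y.
Proof.
rewrite /cardR /quads count_flatten sumnE !big_map /index_iota !subn0.
apply: eq_bigr => a _.
rewrite count_flatten sumnE !big_map.
apply: eq_bigr => x _.
rewrite count_flatten sumnE !big_map.
apply: eq_bigr => b _.
rewrite count_map -sum1_count big_mkcond /=.
by apply: eq_bigr => y _.
Qed.

Lemma sum_pick K (c : nat) (G : nat -> bool) : (forall b : nat, b != c -> G b = false) ->
  \sum_(0 <= b < K) (G b : nat) = (c < K) && G c.
Proof.
move=> HG; elim: K => [|K IH]; first by rewrite big_geq.
rewrite big_nat_recr //= IH.
case: (ltngtP K c) => [h|h|->].
- rewrite (HG K); last by apply/eqP; lia.
  by have -> : c < K.+1 = false by lia.
- rewrite (HG K); last by apply/eqP; lia.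
  have -> : c < K.+1 by lia.
  by case: (G c).
- by rewrite leqnn; case: (G c).
Qed.

Definition T N m s x y := \sum_(0 <= a < N.+1) \sum_(0 <= b < N.+1) F N m s a x b y.

Lemma T_step n m s x y : x <= m -> y <= m -> n <= s -> s <= 2 * n ->
  x + y <= s.+1 -> T n.+2 m s.+2 x y = T n m s x y + (x <= y).
Proof.
move=> hx hy h1 h2 h3.
rewrite /T big_nat_recl //.
rewrite [X in _ + X = _](_ : _ = \sum_(0 <= a < n.+2) (F n.+2 m s.+2 a.+1 x 0 y
   + \sum_(0 <= b < n.+1) F n.+2 m s.+2 a.+1 x b.+1 y + F n.+2 m s.+2 a.+1 x n.+2 y));
  last by apply: eq_bigr => a _; rewrite big_nat_recr //= big_nat_recl.
rewrite !big_split /=.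
rewrite [X in _ + (X + _ + _)]big1; last first.
  move=> a _; apply/eqP; rewrite eqb0 /is_pair xpair_eqE; lia.
rewrite add0n [X in _ + (X + _)]big_nat_recr //=.
rewrite [X in _ + (_ + X + _)]big1; last first.
  move=> b _; apply/eqP; rewrite eqb0 /is_pair xpair_eqE; lia.
rewrite addn0.
have -> : \sum_(0 <= i < n.+1) \sum_(0 <= i0 < n.+1) F n.+2 m s.+2 i.+1 x i0.+1 y
   = \sum_(0 <= a < n.+1) \sum_(0 <= b < n.+1) F n m s a x b y.
  apply: eq_big_nat => a ha; apply: eq_big_nat => b hb.
  rewrite /F /is_pair !xpair_eqE; congr nat_of_bool; lia.
rewrite /F (sum_pick _ (s.+2 - x - y)); last first.
  move=> b hb; rewrite /is_pair xpair_eqE; lia.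
rewrite (sum_pick _ (s - n - x - y - 1)); last first.
  move=> b hb; rewrite /is_pair xpair_eqE; lia.
rewrite /is_pair !xpair_eqE; lia.
Qed.

Lemma cardR_T N m s : cardR N m s =
  \sum_(0 <= x < m.+1) \sum_(0 <= y < m.+1) T N m s x y.
Proof.
rewrite cardR_sum exchange_big /=; apply: eq_bigr => x _.
rewrite /T [RHS]exchange_big /=; apply: eq_bigr => a _.
exact: exchange_big.
Qed.

Lemma tri k : \sum_(0 <= x < k) \sum_(0 <= y < k) ((x <= y) : nat) = 'C(k.+1, 2).
Proof.
elim: k => [|k IH]; first by rewrite big_geq.
rewrite big_nat_recr //=.
under eq_bigr => x _ do rewrite big_nat_recr //=.
rewrite big_split /= IH big_nat_recr //= leqnn.
rewrite (@big1_seq _ _ _ _ _ _ (fun y => ((k <= y) : nat))); last first.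
  by move=> y /andP [_]; rewrite mem_index_iota; lia.
rewrite (@eq_big_nat _ _ _ 0 k (fun x => ((x <= k) : nat)) (fun _ => 1)); last first.
  by move=> x /andP [_ hx]; rewrite ltnW.
rewrite sum_nat_const_nat subn0 muln1 [in RHS]binS bin1; lia.
Qed.

Lemma cardR_step n m s : n <= s -> s <= 2 * n -> 2 * m <= s.+1 ->
  cardR n.+2 m s.+2 = cardR n m s + 'C(m.+2, 2).
Proof.
move=> h1 h2 h3.
rewrite !cardR_T -tri -big_split /=.
apply: eq_big_nat => x hx; rewrite -big_split /=.
apply: eq_big_nat => y hy; apply: T_step; lia.
Qed.

Theorem lemma7p10 (n m : nat) (hm : 2 <= m) (hnm : m <= n) :
  SR (n + 2) m = SR n m + 'C(m + 2, 2) /\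
  (~~ odd (n + m) -> DR (n + 2) m = DR n m + 'C(m + 2, 2)).
Proof.
have ho : odd (n + 2 + m) = odd (n + m).
  by rewrite addn2 !addSn /= negbK.
rewrite /SR /DR ho !addn2; split; last first.
  move=> _; rewrite !addSn; apply: cardR_step; lia.
case: ifP => _.
  rewrite !addSn; apply: cardR_step; lia.
have -> : (n.+2 + m - 1) = (n + m - 1).+2 by lia.
apply: cardR_step; lia.
Qed.
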